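(* Consider (CVOP) and its associated convex projection (Pv) with feasible set $S_a$ and $Y_a=\operatorname{proj}_y[S_a]$. (1) If $\bar S\subseteq S_a$ is a solution of (Pv), then $\bar X:=\operatorname{proj}_x[\bar S]$ is an infimizer of (CVOP). (2) If (Pv) is self-bounded, then (CVOP) is self-bounded. If, additionally, $(\operatorname{cl}Y_a)_\infty=\operatorname{cl}C$, then (CVOP) is bounded. (3) Let (Pv) be self-bounded and let $\bar S\subseteq S_a$ be a finite $\epsilon$-solution of (Pv). Then $\bar X:=\operatorname{proj}_x[\bar S]$ is a finite $\tilde\epsilon$-infimizer of (CVOP) for every $\tilde\epsilon>\epsilon/\delta_c$, where $\delta_c:=\sup\{\delta>0: c+B_\delta\subseteq C\}$.
   Context: (CVOP): $\min\Gamma(x)$ w.r.t. $\le_C$ s.t. $x\in\mathcal{X}$, with $C\subseteq\mathbb{R}^m$ a non-trivial pointed solid convex cone, $\mathcal{X}\subseteq\mathbb{R}^n$ convex, $\Gamma$ $C$-convex; upper image $\mathcal{G}=\operatorname{cl}(\Gamma[\mathcal{X}]+C)$. $S_a=\{(x,y):x\in\mathcal{X},y\in\Gamma(x)+C\}$, $\operatorname{proj}_x(x,y)=x$, $\operatorname{proj}_y(x,y)=y$. Recession cone $A_\infty=\{y:x+\lambda y\in A\ \forall x\in A,\lambda\ge0\}$. Fix a $p$-norm with closed balls $B_\epsilon$, a direction $c\in\operatorname{int}C$ with $\|c\|=1$ and $\epsilon>0$. (CVOP) is bounded if $\mathcal{G}\subseteq\{q\}+C$ for some $q$; self-bounded if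 $\mathcal{G}\ne\mathbb{R}^m$ and $\mathcal{G}\subseteq\{q\}+\mathcal{G}_\infty$ for some $q$. $\bar X\subseteq\mathcal{X}$ is an infimizer if $\mathcal{G}=\operatorname{cl}\operatorname{conv}(\Gamma[\bar X]+C)$. A nonempty finite $\bar X$ is a finite $\epsilon$-infimizer if $\mathcal{G}\subseteq\operatorname{conv}\Gamma[\bar X]+C-\epsilon\{c\}$ (bounded case), resp. $\mathcal{G}\subseteq\operatorname{conv}\Gamma[\bar X]+\mathcal{G}_\infty-\epsilon\{c\}$ (self-bounded case). For (Pv): $\bar S\subseteq S_a$ is a solution if $Y_a\subseteq\operatorname{cl}\operatorname{conv}\operatorname{proj}_y[\bar S]$; (Pv) is self-bounded if $Y_a\ne\mathbb{R}^m$ and $Y_a\subseteq\operatorname{conv}\{y^{(1)},\dots,y^{(k)}\}+(\operatorname{cl}Y_a)_\infty$ for finitely many points; a nonempty finite $\bar S\subseteq S_a$ is a finite $\epsilon$-solution of self-bounded (Pv) if $Y_a\subseteq\operatorname{conv}\operatorname{proj}_y[\bar S]+(\operatorname{cl}Y_a)_\infty+B_\epsilon$. *)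

(* Defs.v *)
From mathcomp Require Import all_boot all_order all_algebra.
From mathcomp Require Import all_classical all_reals all_analysis.
Import numFieldNormedType.Exports.
Set Implicit Arguments. Unset Strict Implicit. Unset Printing Implicit Defensive.
Import Order.TTheory GRing.Theory Num.Theory.
Local Open Scope classical_set_scope.
Local Open Scope ring_scope.

Section CVOP.
Variable R : realType.

Definition pnorm (k : nat) (p : \bar R) (x : 'rV[R]_k) : R :=
  match p with
  | +oo%E => \big[Num.max/0]_(i < k) `|x ord0 i|
  | (r%:E)%E => powR (\sum_(i < k) powR `|x ord0 i| r) r^-1
  | -oo%E => 0
  end.

Definition Bball (k : nat) (p : \bar R) (e : R) : set 'rV[R]_k :=
  [set y | pnorm p y <= e].

Definition msum (k : nat) (A B : set 'rV[R]_k) : set 'rV[R]_k :=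
  [set a + b | a in A & b in B].

Definition conv (k : nat) (A : set 'rV[R]_k) : set 'rV[R]_k :=
  [set y | exists (N : nat) (w : 'I_N -> R) (a : 'I_N -> 'rV[R]_k),
     [/\ (forall i, 0 <= w i), \sum_(i < N) w i = 1, (forall i, A (a i)) &
         y = \sum_(i < N) w i *: a i]].

Definition recc (k : nat) (A : set 'rV[R]_k) : set 'rV[R]_k :=
  [set y | forall x, A x -> forall l : R, 0 <= l -> A (x + l *: y)].

Definition is_convex_set (k : nat) (A : set 'rV[R]_k) : Prop :=
  forall x y, A x -> A y -> forall t : R, 0 <= t <= 1 -> A (t *: x + (1 - t) *: y).

Definition is_cone (k : nat) (C : set 'rV[R]_k) : Prop :=
  forall y, C y -> forall l : R, 0 <= l -> C (l *: y).

(* non-trivial pointed solid convex cone *)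
Definition ntps_convex_cone (k : nat) (C : set 'rV[R]_k) : Prop :=
  [/\ is_cone C, is_convex_set C,
      C != [set 0] /\ C != setT,
      (forall y, C y -> C (- y) -> y = 0)
    & interior C !=set0].

Definition C_convex (n m : nat) (C : set 'rV[R]_m) (X : set 'rV[R]_n)
  (Gam : 'rV[R]_n -> 'rV[R]_m) : Prop :=
  forall x y, X x -> X y -> forall t : R, 0 <= t <= 1 ->
    C (t *: Gam x + (1 - t) *: Gam y - Gam (t *: x + (1 - t) *: y)).

Section Problem.
Variables (n m : nat) (C : set 'rV[R]_m) (X : set 'rV[R]_n)
  (Gam : 'rV[R]_n -> 'rV[R]_m).

Definition upper_image : set 'rV[R]_m := closure (msum (Gam @` X) C).

Definition cvop_bounded : Prop :=
  exists q, upper_image `<=` msum [set q] C.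

Definition cvop_self_bounded : Prop :=
  upper_image != setT /\ exists q, upper_image `<=` msum [set q] (recc upper_image).

Definition infimizer (Xb : set 'rV[R]_n) : Prop :=
  Xb `<=` X /\ upper_image = closure (conv (msum (Gam @` Xb) C)).

(* finite eps-infimizer, self-bounded case *)
Definition finite_eps_infimizer (c : 'rV[R]_m) (eps : R) (Xb : set 'rV[R]_n) : Prop :=
  [/\ Xb `<=` X, Xb !=set0, finite_set Xb &
      upper_image `<=`
        msum (msum (conv (Gam @` Xb)) (recc upper_image)) [set - (eps *: c)]].

Definition Sa : set ('rV[R]_n * 'rV[R]_m) :=
  [set xy | X xy.1 /\ msum [set Gam xy.1] C xy.2].

Definition Ya : set 'rV[R]_m := snd @` Sa.

Definition pv_solution (Sb : set ('rV[R]_n * 'rV[R]_m)) : Prop :=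
  Sb `<=` Sa /\ Ya `<=` closure (conv (snd @` Sb)).

Definition pv_self_bounded : Prop :=
  Ya != setT /\
  exists P : set 'rV[R]_m, finite_set P /\ Ya `<=` msum (conv P) (recc (closure Ya)).

Definition pv_finite_eps_solution (p : \bar R) (eps : R)
  (Sb : set ('rV[R]_n * 'rV[R]_m)) : Prop :=
  [/\ Sb `<=` Sa, Sb !=set0, finite_set Sb &
      Ya `<=` msum (msum (conv (snd @` Sb)) (recc (closure Ya))) (Bball p eps)].

End Problem.

Definition delta_c (m : nat) (p : \bar R) (C : set 'rV[R]_m) (c : 'rV[R]_m) : R :=
  sup [set d : R | 0 < d /\ msum [set c] (Bball p d) `<=` C].

End CVOP.

(* Main.v *)
Require Import Defs.
From mathcomp Require Import all_boot all_order all_algebra.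
From mathcomp Require Import all_classical all_reals all_analysis.
From mathcomp Require Import ring lra.
Import numFieldNormedType.Exports.
Import Order.TTheory GRing.Theory Num.Theory.
Local Open Scope classical_set_scope.
Local Open Scope ring_scope.


Lemma cl_map (T U : topologicalType) (f : T -> U) (A : set T) (B : set U) :
  continuous f -> f @` A `<=` B -> forall x, closure A x -> closure B (f x).
Proof.
move=> cf fAB x clx N Nfx.
have : nbhs x (f @^-1` N) by exact: cf.
move=> /clx [a [Aa Na]]; exists (f a); split => //; apply: fAB; by exists a.
Qed.

Lemma closure_closure (T : topologicalType) (A : set T) :
  closure (closure A) = closure A.
Proof. by rewrite -(closure_id _).1 //; exact: closed_closure. Qed.

Section Aux.
Variable R : realType.

Lemma cont_affine m (x y : 'rV[R]_m) (l : R) :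
  continuous (fun z : 'rV[R]_m => x + l *: z + y).
Proof.
move=> z.
have h1 : {for z, continuous (fun z : 'rV[R]_m => l *: z)}.
  by apply: continuousZ; [exact: cst_continuous | exact: cvg_id].
have h0 : {for z, continuous (fun=> x)} by exact: cst_continuous.
have h3 : {for z, continuous (fun=> y)} by exact: cst_continuous.
have h2 : {for z, continuous (fun z : 'rV[R]_m => x + l *: z)}.
  exact: (continuousD h0 h1).
exact: (continuousD h2 h3).
Qed.

Lemma entry_le m (x : 'rV[R]_m) j : `|x ord0 j| <= `|x|.
Proof.
rewrite (_ : `|x| = mx_norm x) // mx_normrE.
exact: (le_bigmax _ (fun ij : 'I_1 * 'I_m => `|x ij.1 ij.2|) (ord0, j)).
Qed.

Lemma cone_add m (C : set 'rV[R]_m) : is_cone C -> is_convex_set C ->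
  forall a b, C a -> C b -> C (a + b).
Proof.
move=> hc hv a b Ca Cb.
have h : 0 <= (2^-1 : R) <= 1 by apply/andP; split; lra.
have := hc _ (hv a b Ca Cb _ h) 2 ltac:(lra).
congr C; apply/rowP => j; by rewrite !mxE; field.
Qed.

Lemma cone0 m (C : set 'rV[R]_m) : is_cone C -> C !=set0 -> C 0.
Proof. by move=> hc [c Cc]; have := hc c Cc 0 (lexx _); rewrite scale0r. Qed.

Lemma cone_sum m (C : set 'rV[R]_m) : is_cone C -> is_convex_set C -> C !=set0 ->
  forall N (w : 'I_N -> R) (a : 'I_N -> 'rV[R]_m),
  (forall i, 0 <= w i) -> (forall i, C (a i)) -> C (\sum_(i < N) w i *: a i).
Proof.
move=> hc hv hn N w a w0 Ca.
elim/big_ind: _ => //; first exact: cone0.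
  exact: cone_add.
by move=> i _; apply: hc.
Qed.

Lemma conv_mono m (A B : set 'rV[R]_m) : A `<=` B -> Defs.conv A `<=` Defs.conv B.
Proof.
move=> AB y [N [w [a [w0 w1 Aa ->]]]]; exists N, w, a; split => // i.
exact: AB.
Qed.

Lemma conv_convex m (A : set 'rV[R]_m) : is_convex_set A -> Defs.conv A `<=` A.
Proof.
move=> hA y [N [w [a [w0 w1 Aa ->]]]].
elim: N w a w0 w1 Aa => [|N IH] w a w0 w1 Aa.
  by move: w1; rewrite big_ord0 => /eqP; rewrite eq_sym oner_eq0.
rewrite big_ord_recr /=; rewrite big_ord_recr /= in w1.
set s := \sum_(i < N) w (widen_ord (leqnSn N) i) in w1 *.
have s0 : 0 <= s by apply: sumr_ge0 => i _.
have wN : w ord_max = 1 - s by rewrite -w1; ring.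
have [s_eq0|s_neq0] := eqVneq s 0.
  have z i : w (widen_ord (leqnSn N) i) = 0.
    by apply: (psumr_eq0P (P := xpredT) (F := fun i => w (widen_ord (leqnSn N) i))) => // j _.
  rewrite (eq_bigr (fun=> 0)); last by move=> i _; rewrite z scale0r.
  by rewrite big1 // add0r wN s_eq0 subr0 scale1r.
have sp : 0 < s by rewrite lt_def s_neq0.
pose w' := fun i : 'I_N => w (widen_ord (leqnSn N) i) / s.
have Az : A (\sum_(i < N) w' i *: a (widen_ord (leqnSn N) i)).
  apply: IH => //.
  - by move=> i; rewrite /w' divr_ge0.
  - by rewrite /w' -mulr_suml mulfV.
have s1 : 0 <= s <= 1 by rewrite s0 /= -w1 lerDl; exact: w0.
have := hA _ _ Az (Aa ord_max) s s1.
congr A; rewrite wN; congr (_ + _); rewrite scaler_sumr; apply: eq_bigr => i _.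
by rewrite scalerA /w' mulrC mulfVK.
Qed.

End Aux.



Section Aux2.
Variable R : realType.

Lemma recc_add m (A : set 'rV[R]_m) a b : recc A a -> recc A b -> recc A (a + b).
Proof.
move=> ha hb x Ax l l0; rewrite scalerDr addrA; apply: hb => //; exact: ha.
Qed.

Lemma recc_closed m (A : set 'rV[R]_m) : closed A -> closure (recc A) `<=` recc A.
Proof.
move=> cA y cly x Ax l l0.
have := @cl_map _ _ (fun z : 'rV[R]_m => x + l *: z + 0) (recc A) A (@cont_affine R m x 0 l).
move=> /(_ _ y cly); rewrite /= addr0 -(closure_id A).1 //; apply.
by move=> _ [z rz <-]; rewrite addr0; apply: rz.
Qed.

Variables (n m : nat) (C : set 'rV[R]_m) (X : set 'rV[R]_n)
  (Gam : 'rV[R]_n -> 'rV[R]_m).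

Lemma Ya_eq : Ya C X Gam = Defs.msum (Gam @` X) C.
Proof.
rewrite /Ya /Sa /Defs.msum; apply/seteqP; split => y.
  case=> -[x y'] /= [Xx [a -> [b Cb <-]]] <-.
  by exists (Gam x); [exists x | exists b].
move=> [_ [x Xx <-] [b Cb <-]]; exists (x, Gam x + b) => //; split => //=.
by exists (Gam x) => //; exists b.
Qed.

Lemma G_eq : upper_image C X Gam = closure (Ya C X Gam).
Proof. by rewrite Ya_eq. Qed.

Lemma Ya_convex : is_cone C -> is_convex_set C -> is_convex_set X ->
  C_convex C X Gam -> is_convex_set (Ya C X Gam).
Proof.
move=> hc hv hX hG; rewrite Ya_eq.
move=> _ _ [_ [x1 X1 <-] [c1 C1 <-]] [_ [x2 X2 <-] [c2 C2 <-]] t t01.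
exists (Gam (t *: x1 + (1 - t) *: x2)); first by exists (t *: x1 + (1 - t) *: x2); [exact: hX|].
exists ((t *: Gam x1 + (1 - t) *: Gam x2 - Gam (t *: x1 + (1 - t) *: x2))
        + (t *: c1 + (1 - t) *: c2)).
  by apply: cone_add => //; [exact: hG | exact: hv].
by apply/rowP => j; rewrite !mxE; ring.
Qed.

Lemma C_sub_recc : is_cone C -> is_convex_set C -> C `<=` recc (upper_image C X Gam).
Proof.
move=> hc hv c0 Cc0 x Gx l l0.
have := @cl_map _ _ (fun z : 'rV[R]_m => 0 + 1 *: z + l *: c0) (Defs.msum (Gam @` X) C)
  (Defs.msum (Gam @` X) C) (@cont_affine R m 0 (l *: c0) 1).
move=> /(_ _ x); rewrite /= add0r scale1r; apply => //.
move=> _ [_ [a Ga [b Cb <-]] <-]; exists a => //; exists (b + l *: c0).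
  by apply: cone_add => //; exact: hc.
by rewrite add0r scale1r addrA.
Qed.
End Aux2.



Section Aux3.
Variable R : realType.

Lemma conv_lt (z a b t : R) : 0 <= t -> t <= 1 -> z < a -> z < b ->
  z < t * a + (1 - t) * b.
Proof. by move=> *; have [ab|ab] := leP a b; nra. Qed.

Lemma conv_gt (z a b t : R) : 0 <= t -> t <= 1 -> a < z -> b < z ->
  t * a + (1 - t) * b < z.
Proof. by move=> *; have [ab|ab] := leP a b; nra. Qed.

Lemma dense_convex m (A : set 'rV[R]_m) : is_convex_set A ->
  (forall y, closure A y) -> forall z, A z.
Proof.
move=> cA dA z.
have key : forall k, (k <= m)%N -> forall s : 'I_m -> bool, exists a, A a /\
  forall j : 'I_m, ((j < k)%N -> a ord0 j = z ord0 j) /\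
     ((k <= j)%N -> if s j then z ord0 j < a ord0 j else a ord0 j < z ord0 j).
  elim=> [_ s|k IH km s].
    pose x := \row_j (z ord0 j + (if s j then 1 else -1)) : 'rV[R]_m.
    have [a [Aa bxa]] := dA x (ball x 1) (nbhsx_ballx x 1 ltr01).
    exists a; split => // j; split => // _.
    move: bxa; rewrite -ball_normE /= => h.
    have := le_lt_trans (@entry_le R m (x - a) j) h.
    rewrite !mxE; case: (s j); rewrite ltr_norml => /andP[h1 h2]; lra.
  pose kk := Ordinal km.
  have [ap [Aap hp]] := IH (ltnW km) (fun j => if j == kk then true else s j).
  have [am [Aam hm]] := IH (ltnW km) (fun j => if j == kk then false else s j).
  have := (hp kk).2 (leqnn k); have := (hm kk).2 (leqnn k); rewrite eqxx /= => hmk hpk.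
  set t := (z ord0 kk - am ord0 kk) / (ap ord0 kk - am ord0 kk).
  have d0 : 0 < ap ord0 kk - am ord0 kk by lra.
  have t01 : 0 <= t <= 1.
    apply/andP; split; first by rewrite divr_ge0 //; lra.
    by rewrite ler_pdivrMr // mul1r; lra.
  exists (t *: ap + (1 - t) *: am); split; first exact: cA.
  move=> j; rewrite !mxE; split => [jk|kj].
    have [jk'|jk'] := ltnP j k.
      by rewrite (hp j).1 // (hm j).1 //; ring.
    have -> : j = kk by apply/val_inj => /=; apply/eqP; rewrite eqn_leq jk' andbT -ltnS.
    rewrite /t; field; lra.
  have jnk : j != kk by rewrite -(inj_eq val_inj) /= neq_ltn kj orbT.
  have := (hp j).2 (ltnW kj); have := (hm j).2 (ltnW kj); rewrite (negbTE jnk).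
  move/andP: t01 => [t0 t1].
  case: (s j) => h1 h2; [exact: conv_lt | exact: conv_gt].
have [a [Aa ha]] := key m (leqnn m) (fun=> true).
have -> : z = a; last exact: Aa.
by apply/rowP => j; rewrite (ha j).1.
Qed.

End Aux3.



Section Aux4.
Variable R : realType.

Lemma pnorm_ge k (p : \bar R) (x : 'rV[R]_k) i : (1 <= p)%E -> `|x ord0 i| <= pnorm p x.
Proof.
case: p => [r||] //=; last first.
  move=> _; exact: (le_bigmax _ (fun i => `|x ord0 i|) i).
rewrite lee_fin => r1.
have r0 : r != 0 by rewrite gt_eqF //; lra.
have -> : `|x ord0 i| = (`|x ord0 i| `^ r) `^ r^-1.
  by rewrite -powRrM mulfV // powRr1.
apply: ge0_ler_powR; first by rewrite invr_ge0; lra.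
- by rewrite nnegrE powR_ge0.
- by rewrite nnegrE sumr_ge0 // => j _; rewrite powR_ge0.
rewrite (bigD1 i) //= lerDl sumr_ge0 // => j _; exact: powR_ge0.
Qed.

Lemma pnormZ k (p : \bar R) (x : 'rV[R]_k) a : (1 <= p)%E -> 0 < a ->
  pnorm p (a *: x) = a * pnorm p x.
Proof.
move=> p1 a0; case: p p1 => [r||] /= p1; last by rewrite mulr0.
  have -> : \sum_(i < k) `|(a *: x) ord0 i| `^ r = a `^ r * \sum_(i < k) `|x ord0 i| `^ r.
    rewrite mulr_sumr; apply: eq_bigr => i _.
    by rewrite mxE normrM (gtr0_norm a0) powRM // ltW.
  rewrite powRM; [|exact: powR_ge0|by apply: sumr_ge0 => i _; exact: powR_ge0].
  have r0 : r != 0 by move: p1; rewrite lee_fin => ?; rewrite gt_eqF //; lra.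
  by rewrite -powRrM mulfV // powRr1 // ltW.
elim/big_ind2: _ => [|u v u' v' -> ->|i _]; first by rewrite mulr0.
  by rewrite maxr_pMr // ltW.
by rewrite mxE normrM (gtr0_norm a0).
Qed.

End Aux4.



Section Aux5.
Variable R : realType.
Variables (m : nat) (C : set 'rV[R]_m) (c : 'rV[R]_m).

Lemma int_ball : interior C c -> exists2 r : R, 0 < r & forall v, `|v| < r -> C (c + v).
Proof.
move=> /nbhs_ballP [r r0 H]; exists r => // v hv; apply: H.
by rewrite -ball_normE /= opprD addrA subrr sub0r normrN.
Qed.

Lemma add_closure : is_cone C -> is_convex_set C -> interior C c ->
  forall d, closure C d -> C (c + d).
Proof.
move=> hc hv /int_ball [r r0 H] d cld.
have [d' [Cd' bd']] := cld _ (nbhsx_ballx d r r0).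
have -> : c + d = (c + (d - d')) + d' by rewrite addrA subrK.
apply: cone_add => //; apply: H.
by move: bd'; rewrite -ball_normE.
Qed.

Lemma finite_q : is_cone C -> is_convex_set C -> interior C c ->
  forall P, finite_set P -> exists q, forall v, Defs.conv P v -> C (v - q).
Proof.
move=> hc hv ic P fP.
have [r r0 H] := int_ball ic.
have [M [_ HM]] := compact_bounded (finite_compact fP).
pose M' := `|M| + 1.
have M'0 : 0 < M' by rewrite /M'; have := normr_ge0 M; lra.
have PM : forall v, P v -> `|v| <= M'.
  move=> v Pv; apply: (HM M') => //; rewrite /M'; have := ler_norm M; lra.
pose T := M' / r + 1.
have T0 : 0 < T by rewrite /T; have := divr_gt0 M'0 r0; lra.
exists (- (T *: c)).
have Cp : forall v, P v -> C (v - - (T *: c)).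
  move=> v Pv.
  have -> : v - - (T *: c) = T *: (c + T^-1 *: v).
    by rewrite opprK scalerDr scalerA mulfV ?gt_eqF // scale1r addrC.
  apply: hc; last exact: ltW.
  apply: H; rewrite normrZ gtr0_norm ?invr_gt0 //.
  rewrite ltr_pdivrMl //.
  apply: (le_lt_trans (PM v Pv)).
  rewrite /T mulrDl divfK ?gt_eqF //; lra.
move=> _ [N [w [a [w0 w1 Pa ->]]]].
have -> : \sum_(i < N) w i *: a i - - (T *: c) = \sum_(i < N) w i *: (a i - - (T *: c)).
  under [RHS]eq_bigr do rewrite scalerDr.
  by rewrite big_split /= -scaler_suml w1 scale1r.
apply: cone_sum => //; first by exists c; have := H 0; rewrite addr0 normr0; apply.
by move=> i; apply: Cp.
Qed.

End Aux5.



Section Aux6.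
Variable R : realType.
Variables (m : nat) (C : set 'rV[R]_m) (c : 'rV[R]_m) (p : \bar R).

Lemma dc_lemma : (1 <= p)%E -> C != setT -> interior C c ->
  forall eps eps' : R, 0 < eps -> eps / delta_c p C c < eps' ->
  0 < eps' /\ exists d, [/\ 0 < d, Defs.msum [set c] (Bball p d) `<=` C & eps < eps' * d].
Proof.
move=> p1 CT ic eps eps' e0 hlt.
have [r r0 H] := @int_ball R m C c ic.
pose S := [set d : R | 0 < d /\ Defs.msum [set c] (Bball p d) `<=` C].
have Sr : S (r / 2).
  split; first by lra.
  move=> _ [_ -> [b Bb <-]]; apply: H.
  have : `|b| <= r / 2.
    rewrite (_ : `|b| = mx_norm b) // mx_normrE; apply: bigmax_le => [|[i j] _].
      lra.
    rewrite /= (ord1 i); exact: le_trans (@pnorm_ge R m p b j p1) Bb.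
  lra.
have ub : has_ubound S.
  apply: contrapT => nub.
  move/eqP: CT; apply; apply/seteqP; split => // y _.
  pose M := pnorm p (y - c).
  have [d [Sd dM]] : exists d, S d /\ M < d.
    apply: contrapT => hn; apply: nub; exists M => d Sd.
    rewrite leNgt; apply/negP => h; apply: hn; by exists d.
  apply: Sd.2; exists c => //; exists (y - c); last by rewrite addrC subrK.
  by rewrite /Bball /=; apply: ltW.
have hs : has_sup S by split => //; exists (r / 2).
have D0 : r / 2 <= sup S by exact: sup_upper_bound.
rewrite /delta_c -/S in hlt.
set D := sup S in D0 hlt.
have Dp : 0 < D by lra.
have e'0 : 0 < eps' by apply: lt_trans hlt; exact: divr_gt0.
split => //.
have hlt' : eps / eps' < D.
  by rewrite ltr_pdivrMr // mulrC -ltr_pdivrMr.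
have hm : 0 < D - eps / eps' by rewrite subr_gt0.
have [d Sd hd] := sup_adherent hm hs.
exists d; split; [exact: Sd.1 | exact: Sd.2 |].
rewrite -/D opprB addrC subrK in hd.
by rewrite mulrC -ltr_pdivrMr.
Qed.

End Aux6.



Lemma conv_msum (R : realType) m (A C : set 'rV[R]_m) :
  is_cone C -> is_convex_set C -> C !=set0 ->
  Defs.conv (Defs.msum A C) `<=` Defs.msum (Defs.conv A) C.
Proof.
move=> hc hv hn _ [N [w [a [w0 w1 Ha ->]]]].
have ex : forall i : 'I_N, exists uv : 'rV[R]_m * 'rV[R]_m,
    [/\ A uv.1, C uv.2 & uv.1 + uv.2 = a i].
  by move=> i; have [u Au [v Cv <-]] := Ha i; exists (u, v).
have [f hf] := choice ex.
exists (\sum_(i < N) w i *: (f i).1).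
  exists N, w, (fun i => (f i).1); split => // i; by case: (hf i).
exists (\sum_(i < N) w i *: (f i).2).
  by apply: cone_sum => // i; case: (hf i).
rewrite -big_split /=; apply: eq_bigr => i _.
by rewrite -scalerDr; case: (hf i) => _ _ ->.
Qed.

Theorem mainTheorem12 (R : realType) (n m : nat) (p : \bar R)
  (C : set 'rV[R]_m) (X : set 'rV[R]_n) (Gam : 'rV[R]_n -> 'rV[R]_m)
  (c : 'rV[R]_m) (eps : R) :
  (1 <= p)%E ->
  ntps_convex_cone C ->
  is_convex_set X ->
  C_convex C X Gam ->
  interior C c -> pnorm p c = 1 -> 0 < eps ->
  (* (1) *)
  (forall Sb, pv_solution C X Gam Sb -> infimizer C X Gam (fst @` Sb)) /\
  (* (2) *)
  (pv_self_bounded C X Gam -> cvop_self_bounded C X Gam) /\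
  (pv_self_bounded C X Gam -> recc (closure (Ya C X Gam)) = closure C ->
     cvop_bounded C X Gam) /\
  (* (3) *)
  (pv_self_bounded C X Gam ->
   forall Sb, pv_finite_eps_solution C X Gam p eps Sb ->
   forall eps' : R, eps / delta_c p C c < eps' ->
     finite_eps_infimizer C X Gam c eps' (fst @` Sb)).
Proof.
move=> p1 [hc hv [C0 CT] pointed solid] hX hG ic pc e0.
set G := upper_image C X Gam.
have GE : G = closure (Ya C X Gam) by exact: G_eq.
have CR : C `<=` recc G by exact: C_sub_recc.
have Cn : C !=set0 by exists c; exact: nbhs_singleton.
have Gcl : closed G by rewrite GE; exact: closed_closure.
have self_q : pv_self_bounded C X Gam -> exists q, G `<=` Defs.msum [set q] (recc G).
  move=> [YT [P [fP hP]]].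
  have [q hq] := @finite_q R m C c hc hv ic P fP.
  exists q => y Gy.
  have yq : recc G (y - q).
    apply: recc_closed => //.
    have := @cl_map _ _ (fun z : 'rV[R]_m => 0 + 1 *: z + (- q)) (Ya C X Gam) (recc G)
      (@cont_affine R m 0 (- q) 1).
    move=> /(_ _ y); rewrite /= add0r scale1r; apply; last by rewrite -GE.
    move=> _ [y' Yy' <-]; rewrite add0r scale1r.
    have [v cv [rr rrr <-]] := hP y' Yy'.
    have -> : v + rr - q = (v - q) + rr by rewrite addrAC.
    by apply: recc_add; [apply: CR; exact: hq | rewrite -GE in rrr].
  by exists q => //; exists (y - q) => //; rewrite addrC subrK.
split; [|split; [|split]].
- move=> Sb [SbS hY]; split.
    by move=> _ [xy Sxy <-]; exact: (SbS _ Sxy).1.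
  apply/seteqP; split.
    rewrite G_eq => y cy.
    have := closure_subset hY cy; rewrite closure_closure.
    apply: closure_subset; apply: conv_mono.
    move=> _ [xy Sxy <-]; have [Xx [a ha [b Cb <-]]] := SbS _ Sxy.
    exists (Gam xy.1); last by exists b => //; rewrite ha.
    by exists xy.1 => //; exists xy.
  rewrite G_eq; apply: closure_subset => v hcv.
  apply: (@conv_convex R m _ (@Ya_convex R n m C X Gam hc hv hX hG)).
  apply: conv_mono hcv; rewrite Ya_eq.
  move=> _ [_ [_ [xy Sxy <-] <-] [b Cb <-]].
  exists (Gam xy.1); last by exists b.
  by exists xy.1 => //; exact: (SbS _ Sxy).1.
- move=> hs; split; last exact: self_q.
  apply/eqP => GT; have [YT _] := hs.
  move/eqP: YT; apply; apply/seteqP; split => // z _.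
  apply: (@dense_convex R m _ (@Ya_convex R n m C X Gam hc hv hX hG)) => y.
  by rewrite -G_eq GT.
- move=> hs hrec; have [q hq] := self_q hs.
  exists (q - c) => y Gy; have [_ -> [r rr <-]] := hq y Gy.
  rewrite -/G GE hrec in rr.
  exists (q - c) => //; exists (c + r); first exact: add_closure.
  by rewrite addrA subrK.
move=> hs Sb [SbS Sbn fSb hY] eps' he.
have [e'0 [d [d0 hd hed]]] := @dc_lemma R m C c p p1 CT ic eps eps' e0 he.
split.
- by move=> _ [xy Sxy <-]; exact: (SbS _ Sxy).1.
- by have [xy Sxy] := Sbn; exists xy.1; exists xy.
- exact: finite_image.
move=> y Gy.
rewrite -/G in Gy *.
pose t := eps / (eps' * d).
have t0 : 0 < t by rewrite /t divr_gt0 // mulr_gt0.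
have t1 : t < 1 by rewrite /t ltr_pdivrMr ?mul1r // mulr_gt0.
have td : t * eps' * d = eps by rewrite /t -mulrA divfK // gt_eqF // mulr_gt0.
clearbody t.
have k0 : 0 < (1 - t) * eps' by rewrite mulr_gt0 // subr_gt0.
have [r r0 H] := @int_ball R m C c ic.
have cly : closure (Ya C X Gam) y by rewrite -GE.
have [y' [Yy' byy']] := cly _ (nbhsx_ballx y ((1 - t) * eps' * r) (mulr_gt0 k0 r0)).
have [_ [v cv [rr rrr <-]] [b Bb yE]] := hY y' Yy'; subst y'.
have sub1 : snd @` Sb `<=` Defs.msum (Gam @` (fst @` Sb)) C.
  move=> _ [xy Sxy <-]; have [Xx [a ha [b' Cb <-]]] := SbS _ Sxy.
  exists (Gam xy.1); last by exists b' => //; rewrite ha.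
  by exists xy.1 => //; exists xy.
have [g cg [c0 Cc0 vE]] := @conv_msum R m _ C hc hv Cn v (@conv_mono R m _ _ sub1 v cv).
subst v.
pose e := b + (y - (g + c0 + rr + b)) + eps' *: c.
have Ce : C e.
  have -> : e = (t * eps') *: (c + (t * eps')^-1 *: b)
      + ((1 - t) * eps') *: (c + ((1 - t) * eps')^-1 *: (y - (g + c0 + rr + b))).
    have tne : t * eps' != 0 by rewrite gt_eqF // mulr_gt0.
    have kne : (1 - t) * eps' != 0 by rewrite gt_eqF.
    apply/rowP => j; rewrite /e !mxE; field.
    have h : 0 < 1 - t by rewrite subr_gt0.
    by rewrite (gt_eqF e'0) (gt_eqF t0) (gt_eqF h).
  apply: (@cone_add R m C hc hv); apply: hc; [|exact: ltW (mulr_gt0 t0 e'0)| |exact: ltW].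
    apply: hd; exists c => //; exists ((t * eps')^-1 *: b) => //.
    rewrite /Bball /= pnormZ // ?invr_gt0 ?mulr_gt0 //.
    rewrite ler_pdivrMl ?mulr_gt0 //; rewrite td; exact: Bb.
  apply: H; rewrite normrZ gtr0_norm ?invr_gt0 //.
  rewrite ltr_pdivrMl //.
  by move: byy'; rewrite -ball_normE /=.
exists (g + (c0 + rr + e)).
  exists g => //; exists (c0 + rr + e) => //.
  apply: recc_add; last exact: CR.
  by apply: recc_add; [exact: CR | rewrite -GE in rrr].
exists (- (eps' *: c)) => //.
by apply/rowP => j; rewrite /e !mxE; ring.
Qed.
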